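(* Suppose $V$ is irreducible and $\bar p$ is the maximizer of $p\mapsto\min_{k}\mathrm{SIR}_k(p)/\gamma_k$ over $\mathcal P$. Then there is $\beta>0$ such that for every $n\in\mathcal N_0(\bar p)$ both $\beta\tilde p=A^{(n)}\tilde p$ with $\tilde p=(\bar p,1)\in\mathbb R_{++}^{K+1}$ and $\beta\bar p=B^{(n)}\bar p$ hold.
   Context: Network model: $K\ge 2$ links, $\mathcal K=\{1,\dots,K\}$. Power constraint set $\mathcal P=\{p\in\mathbb R_+^K: Cp\le\hat p\}$, where $C\in\{0,1\}^{N\times K}$ has at least one entry equal to $1$ in each column and $\hat p=(P_1,\dots,P_N)\in\mathbb R_{++}^N$; $\mathcal N=\{1,\dots,N\}$; $c_n\in\{0,1\}^K$ is the $n$-th row of $C$ (as a column vector) and $g_n(p)=c_n^Tp/P_n$. Gain matrix $V\in\mathbb R_+^{K\times K}$ with zero diagonal, noise vector $z\in\mathbb R_{++}^K$, $\mathrm{SIR}_k(p)=p_k/((Vp)_k+z_k)$. SIR targets $\gamma_k>0$, $\Gamma=\mathrm{diag}(\gamma_1,\dots,\gamma_K)$. For $n\in\mathcal N$: $B^{(n)}=\Gamma V+\frac1{P_n}\Gamma z c_n^T\in\mathbb R_+^{K\times K}$ and $A^{(n)}=\begin{pmatrix}\Gamma V&\Gamma z\\ \frac1{P_n}c_n^T\Gamma V&\frac1{P_n}c_n^T\Gamma z\end{pmatrix}\in\mathbb R_+^{(K+1)\times(K+1)}$. For $p\in\mathbb R_+^K$, $\mathcal N_0(p)=\{n\in\mathcal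 N: g_n(p)=\max_{m\in\mathcal N}g_m(p)=1\}$. *)

(* Defs.v *)
From HB Require Import structures.
From mathcomp Require Import all_boot all_order all_algebra.
Set Implicit Arguments. Unset Strict Implicit. Unset Printing Implicit Defensive.
Import Order.TTheory GRing.Theory Num.Theory.
Local Open Scope ring_scope.

Section Defs.
Variable R : realFieldType.

(* minimum of a function over 'I_K (default is one of the values, so this is
   the genuine minimum whenever K > 0). *)
Definition min_fin (K : nat) (f : 'I_K -> R) : R :=
  \big[Num.min/ head 0 (map f (enum 'I_K))]_k f k.

Definition irreducible_mx (K : nat) (V : 'M[R]_K) : Prop :=
  forall i j : 'I_K, exists m : nat, (0 < m)%N /\ 0 < (V ^+ m) i j.

Definition SIR (K : nat) (V : 'M[R]_K) (z p : 'cV[R]_K) (k : 'I_K) : R :=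
  p k 0 / ((V *m p) k 0 + z k 0).

Definition in_P (N K : nat) (C : 'M[R]_(N, K)) (phat : 'cV[R]_N) (p : 'cV[R]_K) : Prop :=
  (forall k, 0 <= p k 0) /\ (forall n, (C *m p) n 0 <= phat n 0).

Definition gfun (N K : nat) (C : 'M[R]_(N, K)) (phat : 'cV[R]_N) (n : 'I_N) (p : 'cV[R]_K) : R :=
  (row n C *m p) 0 0 / phat n 0.

Definition in_N0 (N K : nat) (C : 'M[R]_(N, K)) (phat : 'cV[R]_N) (p : 'cV[R]_K) (n : 'I_N) : Prop :=
  gfun C phat n p = \big[Num.max/ gfun C phat n p]_(m < N) gfun C phat m p
  /\ gfun C phat n p = 1.

Definition Gam (K : nat) (gamma : 'rV[R]_K) : 'M[R]_K := diag_mx gamma.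

Definition Bmx (N K : nat) (C : 'M[R]_(N, K)) (phat : 'cV[R]_N) (V : 'M[R]_K)
  (z : 'cV[R]_K) (gamma : 'rV[R]_K) (n : 'I_N) : 'M[R]_K :=
  Gam gamma *m V + (phat n 0)^-1 *: (Gam gamma *m z *m row n C).

Definition Amx (N K : nat) (C : 'M[R]_(N, K)) (phat : 'cV[R]_N) (V : 'M[R]_K)
  (z : 'cV[R]_K) (gamma : 'rV[R]_K) (n : 'I_N) : 'M[R]_(K + 1) :=
  block_mx (Gam gamma *m V) (Gam gamma *m z)
           ((phat n 0)^-1 *: (row n C *m Gam gamma *m V))
           ((phat n 0)^-1 *: (row n C *m Gam gamma *m z)).

Definition ext1 (K : nat) (p : 'cV[R]_K) : 'cV[R]_(K + 1) := col_mx p (const_mx 1).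

End Defs.

(* Main.v *)
Require Import Defs.
From HB Require Import structures.
From mathcomp Require Import all_boot all_order all_algebra.
Import Order.TTheory GRing.Theory Num.Theory.
Local Open Scope ring_scope.

Lemma min_fin_le (R : realFieldType) (K : nat) (f : 'I_K -> R) k :
  min_fin f <= f k.
Proof.
rewrite /min_fin.
elim: (index_enum _) (mem_index_enum k) => [|i s IH] //.
rewrite big_cons /= in_cons ge_min; case/orP => [/eqP <-|/IH ->]; last by rewrite orbT.
by rewrite lexx.
Qed.

Lemma min_fin_ex (R : realFieldType) (K : nat) (f : 'I_K -> R) :
  (0 < K)%N -> exists k, min_fin f = f k.
Proof.
move=> K0; rewrite /min_fin.
apply: (big_ind (fun x => exists k, x = f k)).
- have: (0 < size (enum 'I_K))%N by rewrite size_enum_ord.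
  by case: (enum 'I_K) => [|k s] //= _; exists k.
- move=> x y [i ->] [j ->]; rewrite minEle; case: ifP => _; [exists i|exists j]; by [].
- by move=> i _; exists i.
Qed.

Lemma noedge (R : realFieldType) (K : nat) (V : 'M[R]_K) (S : {set 'I_K}) :
  (forall k j, k \in S -> j \notin S -> V k j = 0) ->
  forall m k j, k \in S -> j \notin S -> (V ^+ m) k j = 0.
Proof.
move=> H; elim=> [|m IH] k j kS jS.
  rewrite expr0 mxE; case: eqP => // E; by move: jS; rewrite -E kS.
rewrite exprS -mulmxE mxE big1 // => l _.
case: (boolP (l \in S)) => lS; first by rewrite IH // mulr0.
by rewrite H // mul0r.
Qed.

Section Main.
Variables (R : realFieldType) (K N : nat)
  (C : 'M[R]_(N, K)) (phat : 'cV[R]_N) (V : 'M[R]_K) (z : 'cV[R]_K)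
  (gamma : 'rV[R]_K).
Hypothesis HC : forall n k, C n k = 0 \/ C n k = 1.
Hypothesis Hphat : forall n, 0 < phat n 0.
Hypothesis HV : forall i j, 0 <= V i j.
Hypothesis Hz : forall k, 0 < z k 0.
Hypothesis Hg : forall k, 0 < gamma 0 k.

Definition D (p : 'cV[R]_K) k := (V *m p) k 0 + z k 0.
Definition r (p : 'cV[R]_K) k := SIR V z p k / gamma 0 k.

Lemma C_ge0 n k : 0 <= C n k.
Proof. by case: (HC n k) => ->; rewrite ?lexx ?ler01. Qed.
Lemma C_le1 n k : C n k <= 1.
Proof. by case: (HC n k) => ->; rewrite ?lexx ?ler01. Qed.

Lemma D_gt0 (p : 'cV[R]_K) : (forall k, 0 <= p k 0) -> forall k, 0 < D p k.
Proof.
move=> hp k; rewrite /D mxE; apply: ltr_wpDl (Hz k).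
by apply: sumr_ge0 => j _; apply: mulr_ge0.
Qed.

Lemma Dg_gt0 (p : 'cV[R]_K) : (forall k, 0 <= p k 0) -> forall k, 0 < D p k * gamma 0 k.
Proof. by move=> hp k; rewrite mulr_gt0 ?D_gt0. Qed.

Lemma rE (p : 'cV[R]_K) k : r p k = p k 0 / (D p k * gamma 0 k).
Proof. by rewrite /r /SIR -/(D p k) invfM mulrA. Qed.

Lemma r_ge (p : 'cV[R]_K) k c : (forall k, 0 <= p k 0) ->
  (c <= r p k) = (c * (D p k * gamma 0 k) <= p k 0).
Proof. by move=> hp; rewrite rE ler_pdivlMr // Dg_gt0. Qed.

Lemma r_gt (p : 'cV[R]_K) k c : (forall k, 0 <= p k 0) ->
  (c < r p k) = (c * (D p k * gamma 0 k) < p k 0).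
Proof. by move=> hp; rewrite rE ltr_pdivlMr // Dg_gt0. Qed.

Lemma D_mono (p p' : 'cV[R]_K) k : (forall k, p' k 0 <= p k 0) -> D p' k <= D p k.
Proof.
move=> h; rewrite /D lerD2r !mxE; apply: ler_sum => j _.
by apply: ler_wpM2l.
Qed.

Lemma D_strict (p p' : 'cV[R]_K) k j : (forall k, p' k 0 <= p k 0) -> V k j != 0 ->
  p' j 0 < p j 0 -> D p' k < D p k.
Proof.
move=> h Vn lt; rewrite /D ltrD2r !mxE (bigD1 j) //= [X in _ < X](bigD1 j) //=.
apply: ltr_leD; first by rewrite ltr_pM2l // lt_neqAle eq_sym Vn HV.
by apply: ler_sum => i _; apply: ler_wpM2l.
Qed.

Lemma in_P_mono (p p' : 'cV[R]_K) : in_P C phat p -> (forall k, 0 <= p' k 0) ->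
  (forall k, p' k 0 <= p k 0) -> in_P C phat p'.
Proof.
move=> [_ hp] h0 h; split=> // n; apply: le_trans (hp n).
rewrite !mxE; apply: ler_sum => k _; apply: ler_wpM2l => //; exact: C_ge0.
Qed.


Lemma edge (S : {set 'I_K}) : irreducible_mx V -> (exists k, k \in S) ->
  (exists j, j \notin S) -> exists k j, [/\ k \in S, j \notin S & V k j != 0].
Proof.
move=> Hirr [k0 k0S] [j0 j0S].
case: (boolP [exists k, exists j, (k \in S) && (j \notin S) && (V k j != 0)]).
  by move/existsP=> [k /existsP [j /andP [/andP [kS jS] v]]]; exists k, j.
move/existsPn=> H.
have H0 : forall k j, k \in S -> j \notin S -> V k j = 0.
  move=> k j kS jS; move/existsPn: (H k) => /(_ j); rewrite kS jS /= negbK.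
  by move/eqP.
case: (Hirr k0 j0) => m [_ hm].
by rewrite (@noedge _ _ _ _ H0) // ltxx in hm.
Qed.

Variable pbar : 'cV[R]_K.
Hypothesis HK : (0 < K)%N.
Hypothesis HP : in_P C phat pbar.
Hypothesis Hopt : forall p, in_P C phat p -> min_fin (r p) <= min_fin (r pbar).

Definition c := min_fin (r pbar).

Lemma c_gt0 : 0 < c.
Proof.
pose s := \sum_n (phat n 0)^-1.
have s0 : 0 <= s by apply: sumr_ge0 => n _; rewrite invr_ge0 ltW.
have s1 : 0 < 1 + s by apply: ltr_pwDl.
pose eps := (K%:R * (1 + s))^-1.
have K0 : 0 < K%:R :> R by rewrite ltr0n.
have e0 : 0 < eps by rewrite invr_gt0 mulr_gt0.
pose p0 : 'cV[R]_K := const_mx eps.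
have hp0 : forall k, 0 <= p0 k 0 by move=> k; rewrite mxE ltW.
have P0 : in_P C phat p0.
  split=> // n; rewrite mxE.
  apply: (@le_trans _ _ (\sum_(k < K) eps)).
    apply: ler_sum => k _; rewrite mxE -[X in _ <= X]mul1r.
    by apply: ler_wpM2r; [rewrite ltW | apply: C_le1].
  rewrite sumr_const card_ord -mulr_natl /eps invfM mulrA divff ?mul1r; last first.
    by rewrite gt_eqF.
  rewrite -[phat n 0]invrK lef_pV2 ?posrE ?invr_gt0 //.
  rewrite /s (bigD1 n) //= addrCA lerDl addr_ge0 // sumr_ge0 // => i _.
  by rewrite invr_ge0 ltW.
have := Hopt _ P0; case: (@min_fin_ex _ _ (r p0) HK) => k ->.
apply: lt_le_trans; rewrite rE divr_gt0 //; first by rewrite mxE.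
exact: Dg_gt0.
Qed.

Definition good (p : 'cV[R]_K) := in_P C phat p /\ forall k, c <= r p k.
Definition S (p : 'cV[R]_K) := [set k | r p k <= c].

Lemma good_S p : good p -> exists k, k \in S p.
Proof.
move=> [hP _]; have := Hopt _ hP; case: (@min_fin_ex _ _ (r p) HK) => k -> h.
by exists k; rewrite inE.
Qed.

Lemma step p : irreducible_mx V -> good p -> (exists j, c < r p j) ->
  exists p', [/\ good p', S p' \proper S p & exists j, c < r p' j].
Proof.
move=> Hirr [hP hc] [j0 hj0]; have hp0 := hP.1.
pose q k := c * (D p k * gamma 0 k).
have q_le k : q k <= p k 0 by rewrite -r_ge.
have q_gt k : 0 < q k by rewrite mulr_gt0 ?c_gt0 ?Dg_gt0.
pose p' : 'cV[R]_K := \col_k ((q k + p k 0) / 2).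
have p'E k : p' k 0 = (q k + p k 0) / 2 by rewrite mxE.
have le1 k : p' k 0 <= p k 0 by rewrite p'E (midf_le (q_le k)).2.
have le2 k : q k <= p' k 0 by rewrite p'E (midf_le (q_le k)).1.
have p'0 k : 0 <= p' k 0 by apply: le_trans (ltW (q_gt k)) (le2 k).
have cq k : c * (D p' k * gamma 0 k) <= q k.
  rewrite ler_pM2l ?c_gt0 // ler_pM2r //; exact: D_mono.
have lt1 k : c < r p k -> c < r p' k.
  rewrite r_gt // r_gt // p'E => h; apply: le_lt_trans (cq k) _.
  exact: (midf_lt h).1.
have ge1 k : c <= r p' k by rewrite r_ge // (le_trans (cq k) (le2 k)).
have [k1 [j1 [k1S j1S v]]] : exists k j, [/\ k \in S p, j \notin S p & V k j != 0].
  apply: edge => //; first exact: good_S.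
  by exists j0; rewrite inE -ltNge.
have hj1 : c < r p j1 by move: j1S; rewrite inE -ltNge.
have ltp : p' j1 0 < p j1 0.
  by move: hj1; rewrite r_gt // p'E => h; exact: (midf_lt h).2.
have hk1 : c < r p' k1.
  rewrite r_gt //; apply: lt_le_trans (le2 k1).
  rewrite ltr_pM2l ?c_gt0 // ltr_pM2r //; exact: D_strict v ltp.
exists p'; split.
- by split=> //; apply: in_P_mono hP p'0 le1.
- apply/properP; split.
    apply/subsetP => k; rewrite !inE; apply: contraTT; rewrite -!ltNge; exact: lt1.
  by exists k1; rewrite // inE -ltNge.
- by exists j0; apply: lt1.
Qed.

Lemma all_eq : irreducible_mx V -> forall k, r pbar k = c.
Proof.
move=> Hirr.
have H : forall n p, (#|S p| <= n)%N -> good p -> (exists j, c < r p j) -> False.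
  elim=> [|n IH] p hS hg hj.
    case: (good_S _ hg) => k kS.
    have h0 : (0 < #|S p|)%N by apply/card_gt0P; exists k.
    by move: hS; rewrite leqn0 => /eqP E; rewrite E in h0.
  case: (step _ Hirr hg hj) => p' [hg' hpr hj']; apply: (IH p') => //.
  have lt := proper_card hpr; rewrite -ltnS; exact: leq_trans lt hS.
move=> k; apply/eqP; rewrite eq_le min_fin_le andbT leNgt; apply/negP => hk.
apply: (H _ pbar (leqnn _)) => //; last by exists k.
by split=> // j; apply: min_fin_le.
Qed.

End Main.

Theorem lemma3 (R : realFieldType) (K N : nat)
  (C : 'M[R]_(N, K)) (phat : 'cV[R]_N) (V : 'M[R]_K) (z : 'cV[R]_K)
  (gamma : 'rV[R]_K) (pbar : 'cV[R]_K) :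
  (2 <= K)%N ->
  (forall n k, C n k = 0 \/ C n k = 1) ->
  (forall k, exists n, C n k = 1) ->
  (forall n, 0 < phat n 0) ->
  (forall i j, 0 <= V i j) ->
  (forall i, V i i = 0) ->
  (forall k, 0 < z k 0) ->
  (forall k, 0 < gamma 0 k) ->
  irreducible_mx V ->
  in_P C phat pbar ->
  (forall p, in_P C phat p ->
     min_fin (fun k => SIR V z p k / gamma 0 k)
       <= min_fin (fun k => SIR V z pbar k / gamma 0 k)) ->
  (forall k, 0 < pbar k 0) /\
  exists beta : R, 0 < beta /\
    forall n, in_N0 C phat pbar n ->
      beta *: ext1 pbar = Amx C phat V z gamma n *m ext1 pbar /\
      beta *: pbar = Bmx C phat V z gamma n *m pbar.
Proof.
move=> HK2 HC _ Hphat HV _ Hz Hg Hirr HP Hopt.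
have HK : (0 < K)%N by apply: leq_trans HK2.
have Hopt' : forall p, in_P C phat p ->
    min_fin (r _ _ V z gamma p) <= min_fin (r _ _ V z gamma pbar) := Hopt.
have c0 := @c_gt0 _ _ _ C phat V z gamma HC Hphat HV Hz Hg pbar HK Hopt'.
have Heq := @all_eq _ _ _ C phat V z gamma HC Hphat HV Hz Hg pbar HK HP Hopt' Hirr.
set cc := c _ _ V z gamma pbar in c0 Heq.
have hp0 := HP.1.
have Hp k : pbar k 0 = cc * (D _ _ V z pbar k * gamma 0 k).
  have := Heq k; rewrite rE => <-; rewrite divfK // gt_eqF //.
  exact: (@Dg_gt0 _ _ V z gamma HV Hz Hg pbar hp0 k).
split.
  move=> k; rewrite Hp mulr_gt0 //.
  exact: (@Dg_gt0 _ _ V z gamma HV Hz Hg pbar hp0 k).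
exists cc^-1; split; first by rewrite invr_gt0.
have E' : Gam gamma *m (V *m pbar) + Gam gamma *m z = cc^-1 *: pbar.
  apply/matrixP => k j; rewrite (ord1 j) /Gam -mulmxDr mul_diag_mx mxE.
  rewrite [RHS]mxE (Hp k) mulKf ?gt_eqF // mulrC [(_ + z) k 0]mxE.
  by [].
have E : Gam gamma *m V *m pbar + Gam gamma *m z = cc^-1 *: pbar.
  by rewrite -mulmxA.
have Hone : forall m (X : 'M[R]_(m, 1)), X *m const_mx 1 = X.
  by move=> m X; apply/matrixP => i j; rewrite !ord1 !mxE big_ord1 mxE mulr1.
move=> n [_ Hg1].
have Hr : (phat n 0)^-1 *: (row n C *m pbar) = const_mx 1.
  apply/matrixP => i j; rewrite !ord1 mxE [RHS]mxE mulrC; exact: Hg1.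
split.
- rewrite /ext1 /Amx mul_block_col scale_col_mx Hone Hone E; congr col_mx.
  rewrite -!scalemxAl -scalerDr -!mulmxA -mulmxDr E' -scalemxAr.
  by rewrite scalerA mulrC -scalerA Hr.
- rewrite /Bmx mulmxDl -scalemxAl -[(Gam gamma *m z *m row n C) *m pbar]mulmxA.
  by rewrite scalemxAr Hr Hone E.
Qed.
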